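(* In the standing setting, for every $A'\in Q'$ we have $g(g'(A'))=A'$.
   Context: Standing setting: $(P,\preceq)$ is a finite poset with a bottom and a top element; $f:P\to P'$ is a surjective map onto $P'=f(P)$; $f^{-1}(a')=\{a\in P: f(a)=a'\}$; the relation $\preceq'$ on $P'$ is defined by $b'\preceq' a'$ iff there exist $a\in f^{-1}(a')$, $b\in f^{-1}(b')$ with $b\preceq a$. Assume the three conditions: (D) for all $a',b'\in P'$ with $b'\preceq' a'$ and every $a\in f^{-1}(a')$ there is $b\in f^{-1}(b')$ with $b\preceq a$; (U) for all $a',b'\in P'$ with $b'\preceq' a'$ and every $b\in f^{-1}(b')$ there is $a\in f^{-1}(a')$ with $b\preceq a$; (S) for all $a,b,c\in P$, if $c\preceq b\preceq a$ and $f(c)=f(a)$ then $f(b)=f(a)$. (Then $(P',\preceq')$ is a poset.) A down-set of a poset is a subset $A$ such that $a\in A$ and $b\preceq a$ imply $b\in A$. $Q$ is the set of nonempty down-sets of $(P,\preceq)$ and $Q'$ the set of nonempty down-sets of $(P',\preceq')$, each ordered by inclusion. $g:2^P\to 2^{P'}$ is $g(A)=\{f(a):a\in A\}$. For $A'\in Q'$, $g^{-1}(A')=\{A\in Q: g(A)=A'\}$ and $g'(A')=\bigcup_{A\in g^{-1}(A')}A$. *)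

(* Defs.v *)
From mathcomp Require Import all_boot.
Set Implicit Arguments. Unset Strict Implicit. Unset Printing Implicit Defensive.

Definition is_poset (T : finType) (le : rel T) : Prop :=
  [/\ reflexive le, antisymmetric le & transitive le].

Definition has_bottom (T : finType) (le : rel T) : Prop :=
  exists b : T, forall a, le b a.
Definition has_top (T : finType) (le : rel T) : Prop :=
  exists t : T, forall a, le a t.

Definition induced_le (T T' : finType) (le : rel T) (f : T -> T') : rel T' :=
  fun b' a' => [exists a, exists b, [&& f a == a', f b == b' & le b a]].

Definition condD (T T' : finType) (le : rel T) (f : T -> T') : Prop :=
  forall a' b' : T', induced_le le f b' a' ->
    forall a, f a = a' -> exists b, f b = b' /\ le b a.

Definition condU (T T' : finType) (le : rel T) (f : T -> T') : Prop :=
  forall a' b' : T', induced_le le f b' a' ->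
    forall b, f b = b' -> exists a, f a = a' /\ le b a.

Definition condS (T T' : finType) (le : rel T) (f : T -> T') : Prop :=
  forall a b c : T, le c b -> le b a -> f c = f a -> f b = f a.

Definition is_downset (T : finType) (le : rel T) (A : {set T}) : Prop :=
  forall a b, a \in A -> le b a -> b \in A.

Definition inQ (T : finType) (le : rel T) (A : {set T}) : Prop :=
  is_downset le A /\ A != set0.

Definition g (T T' : finType) (f : T -> T') (A : {set T}) : {set T'} := f @: A.

Definition g' (T T' : finType) (le : rel T) (f : T -> T') (A' : {set T'})
  : {set T} :=
  \bigcup_(A : {set T} | [&& [forall a, forall b, (a \in A) && le b a ==> (b \in A)],
                             A != set0 & g f A == A']) A.

(* Main.v *)
Require Import Defs.
From mathcomp Require Import all_boot.

Theorem lemma9 (T T' : finType) (le : rel T) (f : T -> T') :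
  is_poset le -> has_bottom le -> has_top le ->
  (forall a' : T', exists a : T, f a = a') ->
  condD le f -> condU le f -> condS le f ->
  forall A' : {set T'}, inQ (induced_le le f) A' ->
  g f (g' le f A') = A'.
Proof.
move=> _ _ _ surj _ _ _ A' [dA' nA'].
set B := f @^-1: A'.
have gB : f @: B = A'.
  apply/setP=> y; apply/imsetP/idP.
    by case=> x; rewrite inE => Hx ->.
  by move=> Hy; have [x Hx] := surj y; exists x; rewrite ?inE Hx.
have PB : [&& [forall a, forall b, (a \in B) && le b a ==> (b \in B)],
              B != set0 & g f B == A'].
  apply/and3P; split; last by rewrite /g gB.
  - apply/forallP=> a; apply/forallP=> b; apply/implyP=> /andP[].
    rewrite !inE => Ha Hba; apply: (dA' (f a)) => //.
    by apply/existsP; exists a; apply/existsP; exists b; rewrite !eqxx Hba.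
  - case/set0Pn: nA' => y Hy; have [x Hx] := surj y.
    by apply/set0Pn; exists x; rewrite inE Hx.
apply/setP=> y; apply/imsetP/idP.
  case=> x /bigcupP [A /and3P [_ _ /eqP gA] HxA] ->.
  by rewrite -gA /g; apply: imset_f.
move=> Hy; have [x Hx] := surj y; exists x => //.
by apply/bigcupP; exists B => //; rewrite inE Hx.
Qed.
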